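(* Let $A \in \{0,1\}^{X\times Y}$ be a combinatorial channel and let $E=\{(x,y) : A_{x,y}=1\}$ be the edge set of its channel graph. Then \[ |X| + |Y| - |E| \le p(A). \] Moreover, for any nonempty finite sets $X$, $Y$ and any nonempty $R \subseteq Y$ with $|R| \le |X|$, there is a combinatorial channel $A \in \{0,1\}^{X\times Y}$ whose edge set satisfies $|E| = |X| + |Y| - |R|$ and such that $R$ is an output covering in $A$ (every $x \in X$ has $A_{x,y}=1$ for some $y \in R$).
   Context: A combinatorial channel is a matrix $A \in \{0,1\}^{X\times Y}$ ($X,Y$ finite) in which every row and column contains a $1$. For $y\in Y$, $N(y)=\{x : A_{x,y}=1\}$. A code is a set $C\subseteq X$ with $|N(y)\cap C|\le 1$ for all $y$, and $p(A)$ is the maximum size of a code. *)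

(* Defs.v *)
From mathcomp Require Import all_boot.
Set Implicit Arguments. Unset Strict Implicit. Unset Printing Implicit Defensive.

Definition is_channel (X Y : finType) (A : X -> Y -> bool) : Prop :=
  (forall x : X, exists y : Y, A x y) /\ (forall y : Y, exists x : X, A x y).

Definition N (X Y : finType) (A : X -> Y -> bool) (y : Y) : {set X} :=
  [set x | A x y].

Definition is_code (X Y : finType) (A : X -> Y -> bool) (C : {set X}) : bool :=
  [forall y : Y, #|N A y :&: C| <= 1].

Definition p (X Y : finType) (A : X -> Y -> bool) : nat :=
  \max_(C : {set X} | is_code A C) #|C|.

Definition edges (X Y : finType) (A : X -> Y -> bool) : {set X * Y} :=
  [set e | A e.1 e.2].

Definition output_covering (X Y : finType) (A : X -> Y -> bool) (R : {set Y}) : Prop :=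
  forall x : X, exists2 y, y \in R & A x y.

(* Main.v *)
Require Import Defs.
From mathcomp Require Import all_boot.
From mathcomp Require Import zify.

Section S.
Variables (X Y : finType).

Definition rem_e (A : X -> Y -> bool) (x0 : X) (y0 : Y) :=
  fun x y => A x y && ((x, y) != (x0, y0)).

Definition Ys (A : X -> Y -> bool) : {set Y} := [set y | [exists x, A x y]].

Lemma code_le {A : X -> Y -> bool} {C} : is_code A C -> #|C| <= p A.
Proof. move=> h; exact: (@leq_bigmax_cond _ (fun C => is_code A C) (fun C => #|C|) C h). Qed.

Lemma p_rem (A : X -> Y -> bool) x0 y0 : p (rem_e A x0 y0) <= (p A).+1.
Proof.
apply/bigmax_leqP => C HC.
have HC' : is_code A (C :\ x0).
  apply/forallP => y; move/forallP: HC => /(_ y) h.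
  apply: leq_trans h; apply: subset_leq_card; apply/subsetP => x.
  rewrite !inE /rem_e => /andP [Ha /andP [Hx HC1]].
  by rewrite Ha HC1 /= andbT; apply: contra Hx => /eqP [-> _].
have := code_le HC'.
rewrite (cardsD1 x0 C); case: (x0 \in C) => /=; lia.
Qed.

Lemma p_rem_pend {A : X -> Y -> bool} {x0 y0} :
  (forall x, A x y0 -> x = x0) -> p (rem_e A x0 y0) <= p A.
Proof.
move=> Hp; apply/bigmax_leqP => C HC; apply: code_le.
apply/forallP => y; case: (eqVneq y y0) => [->|Hy].
  rewrite -(cards1 x0); apply: subset_leq_card.
  by apply/subsetP => x; rewrite !inE => /andP [/Hp -> _].
move/forallP: HC => /(_ y) h; apply: leq_trans h; apply: subset_leq_card.
apply/subsetP => x; rewrite !inE /rem_e => /andP [-> ->] /=.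
by rewrite andbT; apply/negP => /eqP [_ E]; rewrite E eqxx in Hy.
Qed.

Lemma edges_rem {A : X -> Y -> bool} {x0 y0} : A x0 y0 ->
  #|edges A| = (#|edges (rem_e A x0 y0)|).+1.
Proof.
move=> H; rewrite (cardsD1 (x0, y0) (edges A)) inE H add1n; congr _.+1.
apply: eq_card => [[x y]]; rewrite !inE /rem_e /=.
by rewrite andbC.
Qed.

Lemma main_ind n : forall A : X -> Y -> bool,
  #|edges A| = n -> #|X| + #|Ys A| - n <= p A.
Proof.
elim: n => [|n IH] A HE.
  have H0 : forall x y, A x y = false.
    move=> x y; apply/negP => h.
    have : (x, y) \in edges A by rewrite inE.
    by move/card0_eq: HE => ->.
  have -> : Ys A = set0 by apply/setP => y; rewrite !inE; apply/existsP => -[x]; rewrite H0.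
  rewrite cards0 addn0 subn0 -cardsT; apply: code_le.
  by apply/forallP => y; rewrite (_ : N A y :&: setT = set0) ?cards0 //;
    apply/setP => x; rewrite !inE H0.
have : 0 < #|edges A| by rewrite HE.
case/card_gt0P => -[x0 y0]; rewrite inE /= => H.
have HE' : #|edges (rem_e A x0 y0)| = n by move: (edges_rem H); rewrite HE => -[].
have IH' := IH _ HE'.
have Hsub : Ys A \subset y0 |: Ys (rem_e A x0 y0).
  apply/subsetP => y; rewrite !inE => /existsP [x Hx].
  case: (eqVneq y y0) => //= Hy; apply/existsP; exists x.
  by rewrite /rem_e Hx /=; apply/negP => /eqP [_ E]; rewrite E eqxx in Hy.
have Hsub2 : Ys (rem_e A x0 y0) \subset Ys A.
  apply/subsetP => y; rewrite !inE => /existsP [x /andP [Hx _]].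
  by apply/existsP; exists x.
have L1 := subset_leq_card Hsub; have L2 := subset_leq_card Hsub2.
have L3 := cardsU1 y0 (Ys (rem_e A x0 y0)).
case: (boolP [exists x, A x y0 && (x != x0)]) => [/existsP [x1 /andP [H1 H1']]|Hn].
  have Hy0 : y0 \in Ys (rem_e A x0 y0).
    rewrite inE; apply/existsP; exists x1; rewrite /rem_e H1 /=.
    by rewrite xpair_eqE (negbTE H1').
  have := p_rem A x0 y0; move=> Hq; move: L3 L1; rewrite Hy0 /= => L3 L1; rewrite L3 add0n in L1; move: IH' L1 L2 Hq; set a := #|Ys A|; set b := #|Ys _|; set q := p _; set r := p _; move: (#|X|) => c; clearbody a b q r; lia.
have Hp : forall x, A x y0 -> x = x0.
  move=> x Hx; apply/eqP; apply: contraNT Hn => Hne.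
  by apply/existsP; exists x; rewrite Hx.
have Hq := p_rem_pend Hp; rewrite L3 in L1.
move: IH' L1 L2 Hq; set a := #|Ys A|; set b := #|Ys _|; set q := p _; set r := p _.
case: (y0 \in Ys _) => /=; move: (#|X|) => c; clearbody a b q r; lia.
Qed.

End S.

Theorem lemma9 :
  (forall (X Y : finType) (A : X -> Y -> bool),
      is_channel A -> #|X| + #|Y| - #|edges A| <= p A)
  /\
  (forall (X Y : finType) (R : {set Y}),
      0 < #|X| -> 0 < #|Y| -> R != set0 -> #|R| <= #|X| ->
      exists A : X -> Y -> bool,
        [/\ is_channel A, #|edges A| = #|X| + #|Y| - #|R| & output_covering A R]).
Proof.
split.
  move=> X Y A [_ HY].
  have -> : #|Y| = #|@Ys X Y A|.
    rewrite -cardsT; apply: eq_card => y; rewrite !inE.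
    by case: (HY y) => x Hx; apply/esym/existsP; exists x.
  exact: (@main_ind X Y _ A erefl).
move=> X Y R HX _ HR HRX.
case/card_gt0P: HX => x0 _.
case/set0Pn: HR => r0 Hr0.
pose f (x : X) := nth r0 (enum R) (enum_rank x).
have Hf : forall x, f x \in R.
  move=> x; rewrite /f; case: (ltnP (enum_rank x) (size (enum R))) => h.
    by rewrite -mem_enum mem_nth.
  by rewrite nth_default.
exists (fun x y => (y == f x) || ((y \notin R) && (x == x0))); split.
- split.
    by move=> x; exists (f x); rewrite eqxx.
  move=> y; case: (boolP (y \in R)) => Hy.
    have Hi : index y (enum R) < #|X|.
      apply: leq_trans HRX; rewrite cardE index_mem mem_enum //.
    exists (enum_val (Ordinal Hi)); rewrite /f enum_valK /=.
    by rewrite nth_index ?mem_enum ?eqxx.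
  by exists x0 => /=; rewrite eqxx orbT.
- have -> : edges (fun x y => (y == f x) || ((y \notin R) && (x == x0))) =
    [set (x, f x) | x : X] :|: [set (x0, y) | y in ~: R].
    apply/setP => -[x y]; rewrite !inE /=; apply/idP/idP.
      case/orP => [/eqP ->|/andP [Hy /eqP ->]]; apply/orP.
        by left; apply/imsetP; exists x.
      by right; apply/imsetP; exists y; rewrite ?inE.
    case/orP => /imsetP [z Hz [-> ->]]; first by rewrite eqxx.
    by move: Hz; rewrite inE => ->; rewrite eqxx orbT.
  rewrite cardsU.
  have -> : [set (x, f x) | x : X] :&: [set (x0, y) | y in ~: R] = set0.
    apply/setP => -[x y]; rewrite !inE; apply/negP => /andP [/imsetP [z _ [_ ->]]].
    by case/imsetP => w; rewrite inE => Hw [_ E]; move: Hw; rewrite -E Hf.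
  rewrite cards0 subn0 card_imset; last by move=> a b [].
  rewrite card_imset; last by move=> a b [].
  rewrite cardsCs setCK; have := subset_leq_card (subsetT R); rewrite cardsT.
  move: (#|X|) (#|Y|) (#|R|) => a b c; lia.
- by move=> x; exists (f x); rewrite ?Hf ?eqxx.
Qed.
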